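(* Let $A$ be a non-empty set and let $M$ be an equidecomposable magma. Then $\mathbb{M}_A\times M\cong \mathbb{M}_{(A\times M)\cup(\mathbb{M}_A\times \mathrm{Indec}(M))}$.
   Context: A magma is a set with a binary operation $+$; it is equidecomposable if $x+y=x'+y'$ implies $x=x'$ and $y=y'$. $\mathbb{M}_X$ denotes the free magma on a set $X$ (non-associative words over $X$ with $x+y=(x,y)$). The direct product $\mathbb{M}_A\times M$ carries the componentwise operation. $\mathrm{Indec}(M)=M\setminus(M+M)$ is the set of indecomposable elements of $M$ (those not of the form $x+y$). *)

(* Defs.v *)
Record magma := Magma { carrier :> Type; mop : carrier -> carrier -> carrier }.
Arguments mop {m} _ _.

Definition equidecomposable (M : magma) : Prop :=
  forall x y x' y' : M, mop x y = mop x' y' -> x = x' /\ y = y'.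

Definition indec (M : magma) (m : M) : Prop :=
  ~ exists x y : M, mop x y = m.

Inductive fmag (X : Type) : Type :=
| fgen : X -> fmag X
| fnode : fmag X -> fmag X -> fmag X.
Arguments fgen {X} _.
Arguments fnode {X} _ _.

Definition free_magma (X : Type) : magma := Magma (fmag X) (@fnode X).

Definition prod_magma (M N : magma) : magma :=
  Magma (M * N)%type (fun p q => (mop (fst p) (fst q), mop (snd p) (snd q))).

Definition magma_iso (M N : magma) : Prop :=
  exists (f : M -> N) (g : N -> M),
    (forall x y : M, f (mop x y) = mop (f x) (f y)) /\
    (forall x, g (f x) = x) /\ (forall y, f (g y) = y).

(** The generating set (A x M) ∪ (M_A x Indec(M)), as a subset of M_A x M,
    with A identified with the generators of M_A. *)
Definition gen_set (A : Type) (M : magma) : Type :=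
  { p : (fmag A * M)%type |
      (exists a : A, fst p = fgen a) \/ indec M (snd p) }.

(* Main.v *)
Require Import Defs.
From Stdlib Require Import Classical ClassicalEpsilon ProofIrrelevance.

Definition dec (M : magma) (m : M) : option (M * M)%type :=
  match excluded_middle_informative (exists p : (M * M)%type, mop (fst p) (snd p) = m) with
  | left H => Some (proj1_sig (constructive_indefinite_description _ H))
  | right _ => None
  end.

Lemma dec_some (M : magma) (m : M) p : dec M m = Some p -> mop (fst p) (snd p) = m.
Proof.
  unfold dec. destruct excluded_middle_informative as [H|H]; [|discriminate].
  destruct (constructive_indefinite_description _ H) as [q Hq]; simpl.
  intros E; injection E; intros <-; exact Hq.
Qed.

Lemma dec_none (M : magma) (m : M) : dec M m = None -> indec M m.
Proof.
  unfold dec. destruct excluded_middle_informative as [H|H]; [discriminate|].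
  intros _ [x [y Hxy]]. apply H. exists (x, y). exact Hxy.
Qed.

Lemma dec_indec (M : magma) (m : M) : indec M m -> dec M m = None.
Proof.
  intros Hi. destruct (dec M m) as [p|] eqn:E; [|reflexivity].
  exfalso; apply Hi; exists (fst p), (snd p); now apply dec_some.
Qed.

Fixpoint F (A : Type) (M : magma) (w : fmag A) (m : M) : fmag (gen_set A M) :=
  match w with
  | fgen a => fgen (exist _ (fgen a, m) (or_introl (ex_intro _ a eq_refl)))
  | fnode u v =>
    match excluded_middle_informative (indec M m) with
    | left Hi => fgen (exist _ (fnode u v, m) (or_intror Hi))
    | right _ =>
      match dec M m with
      | Some p => fnode (F A M u (fst p)) (F A M v (snd p))
      | None => F A M u m
      end
    end
  end.

Fixpoint Gm (A : Type) (M : magma) (t : fmag (gen_set A M)) : (fmag A * M)%type :=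
  match t with
  | fgen p => proj1_sig p
  | fnode s u => (fnode (fst (Gm A M s)) (fst (Gm A M u)), mop (snd (Gm A M s)) (snd (Gm A M u)))
  end.

Lemma F_hom (A : Type) (M : magma) : equidecomposable M ->
  forall u v (x y : M), F A M (fnode u v) (mop x y) = fnode (F A M u x) (F A M v y).
Proof.
  intros HE u v x y. simpl.
  destruct excluded_middle_informative as [Hi|Hi].
  - exfalso. apply Hi. exists x, y; reflexivity.
  - destruct (dec M (mop x y)) as [p|] eqn:E.
    + destruct (HE _ _ _ _ (dec_some M _ p E)) as [-> ->]. reflexivity.
    + exfalso. apply Hi, (dec_none M _ E).
Qed.

Theorem theorem5p12 (A : Type) (M : magma) :
  inhabited A -> equidecomposable M ->
  magma_iso (prod_magma (free_magma A) M) (free_magma (gen_set A M)).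
Proof.
  intros _ HE.
  exists (fun p => F A M (fst p) (snd p)), (Gm A M).
  split; [|split].
  - intros [u x] [v y]. simpl. apply (F_hom A M HE).
  - intros [w m]. simpl. revert m. induction w as [a|u IHu v IHv]; intros m.
    + reflexivity.
    + simpl.
      destruct excluded_middle_informative as [Hi|Hi]; [reflexivity|].
      destruct (dec M m) as [p|] eqn:E.
      * simpl. rewrite IHu, IHv. simpl. rewrite (dec_some M m p E). reflexivity.
      * exfalso. apply Hi, (dec_none M _ E).
  - intros t. induction t as [[[w m] H]|s IHs u IHu].
    + simpl. destruct w as [a|w1 w2].
      * simpl; apply f_equal, f_equal, proof_irrelevance.
      * assert (Hi : indec M m).
        { destruct H as [[a Ha]|Hi]; [discriminate|exact Hi]. }
        simpl.
        destruct excluded_middle_informative as [Hi'|Hi']; [|contradiction].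
        simpl; apply f_equal, f_equal, proof_irrelevance.
    + cbn [Gm fst snd]. rewrite (F_hom A M HE). rewrite IHs, IHu. reflexivity.
Qed.
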